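(* Let $(X,\sigma,T)$ and $(X',\sigma',T)$ be as in the context, both with no extra spectrum, and let $\Phi:E(X)\to E(X')$ be an Ellis morphism. Let $e$ be a minimal idempotent of $E(X)$, $L=E(X)e$, $e'=\Phi(e)$, and let $x\in e\pi_{eq}^{-1}(0)$, $x'\in e'\pi_{eq}'^{-1}(0)$. Suppose that (1) every point lying in a singular fibre $\pi_{eq}^{-1}(\xi)$, $\xi\in X_{eq}^{sing}$, separates the idempotents of $L$; (2) $\widetilde{\Phi_{eq}}(X_{eq}^{reg})\subset X_{eq}'^{reg}$; (3) $\Phi(\mathrm{stab}_{\mathcal G}(x))\subset\mathrm{stab}_{\mathcal G'}(x')$. Then $x\mapsto x'$ extends to a factor map $\phi:(X,\sigma)\to(X',\sigma')$ with $\Phi=\phi_*$.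
   Context: $T$ is an abelian group; $(X,\sigma,T)$, $(X',\sigma',T)$ are continuous minimal non-distal actions on compact Hausdorff spaces. $E(X)$ is the Ellis semigroup (closure of $\{\sigma^t\}$ in $X^X$, pointwise topology, composition) with $T$-action $\sigma_E^t(f)=\sigma^t\circ f$. An Ellis morphism is a continuous monoid morphism $\Phi:E(X)\to E(X')$ with $\Phi(\sigma_E^tf)=\sigma'^t_E\Phi(f)$; a factor map $\phi$ induces $\phi_*(f)(\phi(y))=\phi(f(y))$. Points $x,y$ are proximal if $f(x)=f(y)$ for some $f\in E(X)$. $\pi_{eq}:X\to X_{eq}$ is the maximal equicontinuous factor; $X_{eq}$ is a compact abelian group whose neutral element $0$ is singular; $\xi$ is singular if $\pi_{eq}^{-1}(\xi)$ contains two distinct proximal points, regular otherwise; $X^{sing}_{eq}$, $X^{reg}_{eq}$ are the sets of singular/regular points. $\mathcal G=eL$, $\mathrm{stab}_{\mathcal G}(x)=\{g\in\mathcal G:g(x)=x\}$; $L'=E(X')e'$, $\mathcal G'=e'L'$; primed objects are defined analogously. A point separates the idempotents of $L$ if evaluation at it is injective on the idempotents of $L$. $\tilde\pi_{eq}:L\to X_{eq}$, $\tilde\pi_{eq}(f)=\pi_{eq}(f(y))-\pi_{eq}(y)$; $L^{fib}=\tilde\pi_{eq}^{-1}(0)$, $\mathcal G^{fib}=\mathcal G\cap L^{fib}$; $\Gamma$ is the little structure group (subgroup of $\mathcal G$ generated by the entries of the sandwich matrix of a Rees matrix representation of the kernel of $E(X)$). No extra spectrum: the closure of the normal closure of $\Gamma$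 in $\mathcal G$ equals $\mathcal G^{fib}$; in that case the factor map $\eta_0:L_{eq}\to X_{eq}$ with $\tilde\pi_{eq}=\eta_0\circ\pi^L_{eq}$ (where $\pi^L_{eq}:L\to L_{eq}$ is the maximal equicontinuous factor of $(L,\sigma_E|_L)$) is bijective. $\Phi$ restricts to a factor map $L\to L'$, inducing $\Phi_{eq}:L_{eq}\to L'_{eq}$, and $\widetilde{\Phi_{eq}}:=\eta_0'\circ\Phi_{eq}\circ\eta_0^{-1}:X_{eq}\to X'_{eq}$. *)

(* Defs.v *)
From HB Require Import structures.
From mathcomp Require Import all_boot all_order all_algebra.
From mathcomp Require Import all_classical.
From mathcomp Require Import topology tvs.

Set Implicit Arguments.
Unset Strict Implicit.
Unset Printing Implicit Defensive.

Import GRing.Theory.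
Local Open Scope classical_set_scope.
Local Open Scope ring_scope.

Section Dyn.
Variable T : zmodType.

Definition is_action (X : Type) (s : T -> X -> X) :=
  (forall x, s 0 x = x) /\ (forall t u x, s (t + u) x = s t (s u x)).

Definition tds (X : topologicalType) (s : T -> X -> X) :=
  [/\ hausdorff_space X, compact [set: X], is_action s &
      forall t, continuous (s t)].

Definition minimal_sys (X : topologicalType) (s : T -> X -> X) :=
  forall x : X, closure (range (fun t => s t x)) = [set: X].

Definition Ellis (X : topologicalType) (s : T -> X -> X) : set (X -> X) :=
  @closure {ptws X -> X} (range s).

Definition proximal (X : topologicalType) (s : T -> X -> X) (x y : X) :=
  exists f, Ellis s f /\ f x = f y.

Definition distal (X : topologicalType) (s : T -> X -> X) :=
  forall x y, proximal s x y -> x = y.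

Definition ellis_morphism (X X' : topologicalType) (s : T -> X -> X)
    (s' : T -> X' -> X') (Phi : (X -> X) -> (X' -> X')) :=
  [/\ forall f, Ellis s f -> Ellis s' (Phi f),
      {within (Ellis s : set {ptws X -> X}),
         continuous (Phi : {ptws X -> X} -> {ptws X' -> X'})},
      forall f g, Ellis s f -> Ellis s g -> Phi (f \o g) = Phi f \o Phi g,
      Phi id = id &
      forall t f, Ellis s f -> Phi (s t \o f) = s' t \o Phi f].

Definition factor_map (X Y : topologicalType) (s : T -> X -> X)
    (tau : T -> Y -> Y) (p : X -> Y) :=
  [/\ continuous p, (forall y, exists x, p x = y) &
      forall t x, p (s t x) = tau t (p x)].

Section Ideals.
Variables (X : topologicalType) (s : T -> X -> X).

Definition idempotent (f : X -> X) := f \o f = f.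

Definition left_ideal (L : set (X -> X)) :=
  [/\ L `<=` Ellis s, L !=set0 &
      forall f g, Ellis s f -> L g -> L (f \o g)].

Definition min_left_ideal (L : set (X -> X)) :=
  left_ideal L /\ forall L', left_ideal L' -> L' `<=` L -> L' = L.

Definition Lof (e : X -> X) : set (X -> X) := [set f \o e | f in Ellis s].
Definition Rof (e : X -> X) : set (X -> X) := [set e \o f | f in Ellis s].
Definition Gof (e : X -> X) : set (X -> X) := [set e \o f | f in Lof e].

Definition min_idempotent (e : X -> X) :=
  [/\ Ellis s e, idempotent e & min_left_ideal (Lof e)].

Definition subgroupG (e : X -> X) (H : set (X -> X)) :=
  [/\ H `<=` Gof e, H e,
      (forall g h, H g -> H h -> H (g \o h)) &
      (forall g k, H g -> Gof e k -> k \o g = e -> H k)].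

Definition normalG (e : X -> X) (H : set (X -> X)) :=
  subgroupG e H /\
  forall g h k, Gof e g -> H h -> Gof e k -> k \o g = e -> H (g \o h \o k).

(** entries of the sandwich matrix of the Rees matrix representation of the
    kernel of E(X) built on the group G = eE(X)e, with the idempotents of
    eE(X) and of E(X)e as representatives *)
Definition sandwich_entries (e : X -> X) : set (X -> X) :=
  [set g | exists u v, [/\ Lof e u, idempotent u, Rof e v, idempotent v &
                           g = v \o u]].

Definition little_structure_group (e : X -> X) : set (X -> X) :=
  \bigcap_(H in [set H | subgroupG e H /\ sandwich_entries e `<=` H]) H.

Definition normal_closureG (e : X -> X) (A : set (X -> X)) : set (X -> X) :=
  \bigcap_(H in [set H | normalG e H /\ A `<=` H]) H.

Definition stabG (e : X -> X) (x : X) : set (X -> X) :=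
  [set g | Gof e g /\ g x = x].

Definition separates_idempotents (e : X -> X) (y : X) :=
  forall u v, Lof e u -> Lof e v -> idempotent u -> idempotent v ->
    u y = v y -> u = v.

End Ideals.

Definition max_eq_factor (X : topologicalType) (s : T -> X -> X)
    (Xeq : topologicalZmodType) (chi : T -> Xeq) (pi : X -> Xeq) :=
  [/\ hausdorff_space Xeq, compact [set: Xeq],
      (forall t u, chi (t + u) = chi t + chi u),
      factor_map s (fun t (z : Xeq) => z + chi t) pi &
      forall (Y : puniformType) (tau : T -> Y -> Y) (p : X -> Y),
        tds tau -> equicontinuous [set: T] tau -> factor_map s tau p ->
        exists q : Xeq -> Y, continuous q /\ forall x, p x = q (pi x)].

Section Eq.
Variables (X : topologicalType) (s : T -> X -> X) (Xeq : zmodType)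
  (pi : X -> Xeq).

Definition singular (xi : Xeq) :=
  exists y z, [/\ pi y = xi, pi z = xi, y <> z & proximal s y z].

Definition regular (xi : Xeq) := ~ singular xi.

(** \tilde pi_eq (f) computed at the point y (independent of y) *)
Definition tpi (f : X -> X) (y : X) : Xeq := pi (f y) - pi y.

Definition Lfib (e : X -> X) : set (X -> X) :=
  [set f | Lof s e f /\ forall y, tpi f y = 0].

Definition Gfib (e : X -> X) : set (X -> X) := Gof s e `&` Lfib e.

Definition no_extra_spectrum :=
  forall e, min_idempotent s e ->
    (@closure {ptws X -> X}
       (normal_closureG s e (little_structure_group s e))) `&` Gof s e
    = Gfib e.

End Eq.

End Dyn.

(* Main.v *)
Require Import Defs.
From HB Require Import structures.
From mathcomp Require Import all_boot all_order all_algebra.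
From mathcomp Require Import all_classical.
From mathcomp Require Import topology tvs.
Set Implicit Arguments.
Unset Strict Implicit.
Unset Printing Implicit Defensive.
Import GRing.Theory.
Local Open Scope classical_set_scope.
Local Open Scope ring_scope.

Lemma ptws_cvgP (U : Type) (V : topologicalType) (F : set_system {ptws U -> V})
  (f : {ptws U -> V}) {FF : Filter F} :
  F --> f <-> forall t, (fun g : U -> V => g t) @ F --> f t.
Proof.
rewrite /product_topology_def cvg_sup; split.
- move=> + t => /(_ t).
  rewrite cvg_image; last by rewrite eqEsubset; split=> v // _; exists (cst v).
  apply: cvg_trans => W /=; rewrite ?nbhs_simpl /fmap /= => [[W' + <-]].
  by apply: filterS => g W'g /=; exists g.
- move=> pf i.
  rewrite cvg_image; last by rewrite eqEsubset; split=> v // _; exists (cst v).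
  move=> W /pf /= Q; exists ((fun g : U -> V => g i) @^-1` W) => //.
  by rewrite eqEsubset; split => [j [? + <-//]|j Wj]; exists (fun _ => j).
Qed.

Lemma eval_cont (U : Type) (V : topologicalType) (t : U) :
  continuous (fun g : {ptws U -> V} => g t).
Proof.
move=> f; have := (@cvg_id _ (nbhs f)).
by move/ptws_cvgP=> /(_ t).
Qed.

Lemma closure_sub (Y : topologicalType) (A S : set Y) :
  closed S -> A `<=` S -> closure A `<=` S.
Proof. by move=> /closure_id cS AS; rewrite cS; exact: closureS. Qed.

Lemma cont_sub (Y : topologicalType) (M : topologicalZmodType) (a b : Y -> M) :
  continuous a -> continuous b -> continuous (fun h => a h - b h).
Proof.
move=> ca cb x.
apply: (@continuous_comp _ _ _ (fun h => (a h, b h)) (fun p : M * M => p.1 - p.2)).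
  by apply: cvg_pair; [exact: ca|exact: cb].
exact: sub_continuous.
Qed.

Section Ell.
Variables (T : zmodType) (X : topologicalType) (s : T -> X -> X).
Hypothesis Hact : is_action s.
Hypothesis Hcont : forall t, continuous (s t).

Lemma Ellis_range t : Ellis s (s t).
Proof. by apply: subset_closure; exists t. Qed.

Lemma Ellis_id : Ellis s id.
Proof.
have -> : (id : X -> X) = s 0 by apply: funext => y; rewrite (proj1 Hact).
exact: Ellis_range.
Qed.

Lemma Ellis_closed : closed (Ellis s : set {ptws X -> X}).
Proof. exact: closed_closure. Qed.

Lemma Ellis_compl t g : Ellis s g -> Ellis s (s t \o g).
Proof.
pose M := fun g : {ptws X -> X} => (s t \o g : {ptws X -> X}).
have cM : continuous M.
  move=> g0; apply: (proj2 (@ptws_cvgP _ _ (M @ nbhs g0) (M g0) _)) => y.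
  apply: (@continuous_comp _ _ _ (fun h : {ptws X -> X} => h y) (s t)).
    exact: eval_cont.
  exact: Hcont.
have : closure (range s : set {ptws X -> X}) `<=` M @^-1` (Ellis s).
  apply: closure_sub.
    by move/continuous_closedP : cM; apply; exact: Ellis_closed.
  move=> _ [u _ <-]; rewrite /M /=.
  have -> : s t \o s u = s (t + u) by apply: funext => y; rewrite /= (proj2 Hact).
  exact: Ellis_range.
by move=> H /H.
Qed.

Lemma Ellis_comp f g : Ellis s f -> Ellis s g -> Ellis s (f \o g).
Proof.
move=> Ef Eg.
pose N := fun f : {ptws X -> X} => (f \o g : {ptws X -> X}).
have cN : continuous N.
  move=> f0; apply: (proj2 (@ptws_cvgP _ _ (N @ nbhs f0) (N f0) _)) => y.
  exact: (@eval_cont X X (g y)).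
have : closure (range s : set {ptws X -> X}) `<=` N @^-1` (Ellis s).
  apply: closure_sub.
    by move/continuous_closedP : cN; apply; exact: Ellis_closed.
  move=> _ [u _ <-]; rewrite /N /=; exact: Ellis_compl.
by move=> H; apply: H.
Qed.

Lemma Ellis_compact : compact [set: X] -> compact (Ellis s : set {ptws X -> X}).
Proof.
move=> cX; have := @tychonoff X (fun _ => X) (fun _ => setT) (fun _ => cX).
move=> cT; apply: (subclosed_compact Ellis_closed cT) => f _ i; done.
Qed.

End Ell.

Set Implicit Arguments.
Unset Strict Implicit.


Lemma tpi_const (T : zmodType) (X : topologicalType) (s : T -> X -> X)
  (Xeq : topologicalZmodType) (chi : T -> Xeq) (pi : X -> Xeq) :
  hausdorff_space Xeq -> continuous pi ->
  (forall t y, pi (s t y) = pi y + chi t) ->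
  forall h, Ellis s h -> forall y z, pi (h y) - pi y = pi (h z) - pi z.
Proof.
move=> hX cpi pis h Eh y z.
pose D := fun h : {ptws X -> X} => (pi (h y) - pi y) - (pi (h z) - pi z).
have cD : continuous D.
  have ce : forall w, continuous (fun h : {ptws X -> X} => pi (h w)).
    by move=> w g; apply: continuous_comp; [exact: eval_cont|exact: cpi].
  apply: (@cont_sub _ _ (fun h : {ptws X -> X} => pi (h y) - pi y) (fun h : {ptws X -> X} => pi (h z) - pi z)).
    by apply: (@cont_sub _ _ (fun h : {ptws X -> X} => pi (h y)) (fun _ => pi y)); [exact: ce|exact: cst_continuous].
  by apply: (@cont_sub _ _ (fun h : {ptws X -> X} => pi (h z)) (fun _ => pi z)); [exact: ce|exact: cst_continuous].
have : closure (range s : set {ptws X -> X}) `<=` D @^-1` [set 0].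
  apply: closure_sub.
    move/continuous_closedP : cD; apply.
    by apply: compact_closed => //; exact: compact_set1.
  move=> _ [t _ <-]; rewrite /D /= !pis.
  by rewrite [pi y + _]addrC addrK [pi z + _]addrC addrK subrr.
by move=> /(_ h Eh) /= /eqP; rewrite subr_eq0 => /eqP.
Qed.

Lemma idem_pi (T : zmodType) (X : topologicalType) (s : T -> X -> X)
  (Xeq : topologicalZmodType) (chi : T -> Xeq) (pi : X -> Xeq) :
  hausdorff_space Xeq -> continuous pi ->
  (forall t y, pi (s t y) = pi y + chi t) ->
  forall e, Ellis s e -> e \o e = e -> forall y, pi (e y) = pi y.
Proof.
move=> hX cpi pis e Ee ee y.
have := tpi_const hX cpi pis Ee (e y) y.
have -> : e (e y) = e y by rewrite -[in RHS]ee.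
by rewrite subrr => /eqP; rewrite eq_sym subr_eq0 => /eqP.
Qed.

Set Implicit Arguments.
Unset Strict Implicit.


Section Alg.
Variables (T : zmodType) (X : topologicalType) (s : T -> X -> X).
Hypothesis Hact : is_action s.
Hypothesis Hcont : forall t, continuous (s t).
Variable e : X -> X.
Hypothesis He : min_idempotent s e.

Let Ee : Ellis s e. Proof. by case: He. Qed.
Let ee : e \o e = e. Proof. by case: He. Qed.
Let eeP z : e (e z) = e z. Proof. by have := congr1 (fun f => f z) ee. Qed.

Lemma Lof_Ellis f : Lof s e f -> Ellis s f.
Proof. by case=> k Ek <-; apply: Ellis_comp. Qed.

Lemma Lof_e : Lof s e e.
Proof. by exists id => //; exact: Ellis_id. Qed.

Lemma Lof_r f : Lof s e f -> f \o e = f.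
Proof. by case=> k Ek <-; apply: funext => z /=; rewrite eeP. Qed.

Lemma Lof_mul f g : Ellis s f -> Lof s e g -> Lof s e (f \o g).
Proof. by move=> Ef [k Ek <-]; exists (f \o k) => //; exact: Ellis_comp. Qed.

Lemma Gof_char a : Gof s e a <-> exists2 k, Ellis s k & a = e \o k \o e.
Proof.
split; first by case=> _ [k Ek <-] <-; exists k.
by case=> k Ek ->; exists (k \o e) => //; exists k.
Qed.

Lemma Gof_l a : Gof s e a -> e \o a = a.
Proof. by case/Gof_char=> k Ek ->; apply: funext => z /=; rewrite eeP. Qed.

Lemma Gof_r a : Gof s e a -> a \o e = a.
Proof. by case/Gof_char=> k Ek ->; apply: funext => z /=; rewrite eeP. Qed.

Lemma Gof_Ellis a : Gof s e a -> Ellis s a.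
Proof. by case/Gof_char=> k Ek ->; do 2 apply: Ellis_comp => //. Qed.

Lemma Gof_Lof a : Gof s e a -> Lof s e a.
Proof. by move=> Ga; exists a; [exact: Gof_Ellis|exact: Gof_r]. Qed.

Lemma Gof_mul a b : Gof s e a -> Gof s e b -> Gof s e (a \o b).
Proof.
case/Gof_char=> k Ek -> /Gof_char[k' Ek' ->]; apply/Gof_char.
exists (k \o e \o k'); first by do 2 apply: Ellis_comp => //.
by apply: funext => z /=; rewrite eeP.
Qed.

Lemma Gof_mulL a f : Gof s e a -> Lof s e f -> Gof s e (a \o f).
Proof.
case/Gof_char=> k Ek -> [k' Ek' <-]; apply/Gof_char.
exists (k \o e \o k'); first by do 2 apply: Ellis_comp => //.
by [].     
Qed.

Lemma Gof_e : Gof s e e.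
Proof. by apply/Gof_char; exists id; [exact: Ellis_id|change (e = e \o e); rewrite ee]. Qed.

Lemma Gof_linv b : Gof s e b -> exists2 b', Gof s e b' & b' \o b = e.
Proof.
move=> Gb; case: He => _ _ [[LE _ Lid] Lmin].
pose Lb := [set k \o b | k in Lof s e].
have Lbi : left_ideal s Lb.
  split.
  - by move=> _ [k Lk <-]; apply: Ellis_comp => //; [exact: LE|exact: Gof_Ellis].
  - by exists (e \o b); exists e => //; exact: Lof_e.
  - move=> f _ Ef [k Lk <-]; exists (f \o k) => //; exact: Lid.
have LbL : Lb `<=` Lof s e.
  move=> _ [k Lk <-].
  have -> : k \o b = (k \o b) \o e by rewrite -compA (Gof_r Gb).
  by apply: Lof_mul; [apply: Ellis_comp => //; [exact: LE|exact: Gof_Ellis]|exact: Lof_e].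
have LbE := Lmin _ Lbi LbL.
have : Lb e by rewrite LbE; exact: Lof_e.
case=> k Lk kb.
exists (e \o k); first by apply: Gof_mulL => //; exact: Gof_e.
by rewrite -compA kb ee.
Qed.

Lemma Gof_inv b : Gof s e b -> exists2 b', Gof s e b' & b' \o b = e /\ b \o b' = e.
Proof.
move=> Gb; have [b' Gb' b'b] := Gof_linv Gb.
have [b'' Gb'' b''b'] := Gof_linv Gb'.
exists b' => //; split => //.
rewrite -(Gof_l Gb) -b''b'.
have -> : b'' \o b' \o b \o b' = b'' \o ((b' \o b) \o b') by [].
by rewrite b'b (Gof_l Gb').
Qed.

End Alg.

Set Implicit Arguments.
Unset Strict Implicit.


Section WD.
Variables (T : zmodType) (X X' : topologicalType) (s : T -> X -> X) (s' : T -> X' -> X')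
  (Xeq Xeq' : topologicalZmodType) (chi : T -> Xeq) (chi' : T -> Xeq')
  (pi : X -> Xeq) (pi' : X' -> Xeq')
  (Phi : (X -> X) -> (X' -> X')) (e : X -> X) (x : X) (x' : X').
Hypothesis Hact : is_action s.
Hypothesis Hcont : forall t, continuous (s t).
Hypothesis hX : hausdorff_space Xeq.
Hypothesis cpi : continuous pi.
Hypothesis pis : forall t y, pi (s t y) = pi y + chi t.
Hypothesis hX' : hausdorff_space Xeq'.
Hypothesis cpi' : continuous pi'.
Hypothesis pis' : forall t y, pi' (s' t y) = pi' y + chi' t.
Hypothesis HPhi : ellis_morphism s s' Phi.
Hypothesis He : min_idempotent s e.
Hypothesis Hx : exists y, pi y = 0 /\ x = e y.
Hypothesis Hx' : exists y', pi' y' = 0 /\ x' = Phi e y'.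
Hypothesis H1 : forall y, singular s pi (pi y) -> separates_idempotents s e y.
Hypothesis H2 : forall f, Lof s e f -> forall (y : X) (y' : X'),
     regular s pi (tpi pi f y) -> regular s' pi' (tpi pi' (Phi f) y').
Hypothesis H3 : Phi @` stabG s e x `<=` stabG s' (Phi e) x'.

Let Ee : Ellis s e. Proof. by case: He. Qed.
Let ee : e \o e = e. Proof. by case: He. Qed.
Let eeP z : e (e z) = e z. Proof. by have := congr1 (fun f => f z) ee. Qed.

Lemma PhiE f : Ellis s f -> Ellis s' (Phi f).
Proof. by case: HPhi => H _ _ _ _; apply: H. Qed.

Lemma PhiMP f g z : Ellis s f -> Ellis s g -> Phi (f \o g) z = Phi f (Phi g z).
Proof. move=> Ef Eg; case: HPhi => _ _ M _ _. by rewrite (M f g Ef Eg). Qed.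

Lemma ex_ : e x = x.
Proof. by case: Hx => y [_ ->]; rewrite eeP. Qed.

Lemma e'x' : Phi e x' = x'.
Proof. by case: Hx' => y [_ ->]; rewrite -PhiMP // ee. Qed.

Lemma e'e' : Phi e \o Phi e = Phi e.
Proof. by apply: funext => z /=; rewrite -PhiMP // ee. Qed.

Lemma pix : pi x = 0.
Proof. by case: Hx => y [py ->]; rewrite (idem_pi hX cpi pis Ee ee). Qed.

Lemma pix' : pi' x' = 0.
Proof.
by case: Hx' => y [py ->]; rewrite (idem_pi hX' cpi' pis' (PhiE Ee) e'e').
Qed.

Lemma wd f g : Lof s e f -> Lof s e g -> f x = g x -> Phi f x' = Phi g x'.
Proof.
move=> Lf Lg fgx.
have Ef := Lof_Ellis Hact Hcont He Lf.
have Eg := Lof_Ellis Hact Hcont He Lg.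
pose a := e \o f; pose b := e \o g.
have Ga : Gof s e a := Gof_mulL Hact Hcont He (Gof_e Hact He) Lf.
have Gb : Gof s e b := Gof_mulL Hact Hcont He (Gof_e Hact He) Lg.
have abx : a x = b x by rewrite /a /b /= fgx.
have [b' Gb' [b'b bb']] := Gof_inv Hact Hcont He Gb.
pose h := b' \o a.
have Gh : Gof s e h := Gof_mul Hact Hcont He Gb' Ga.
have Eh := Gof_Ellis Hact Hcont He Gh.
have hx : h x = x.
  by rewrite /h /= abx; have := congr1 (fun F => F x) b'b => /= ->; exact: ex_.
have Phh : Phi h x' = x'.
  by have [_ ->] := H3 (ex_intro2 _ _ h (conj Gh hx) erefl).
pose g1 := g \o h.
have Lg1 : Lof s e g1 := Lof_mul Hact Hcont Eg (Gof_Lof Hact Hcont He Gh).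
have Eg1 := Lof_Ellis Hact Hcont He Lg1.
have g1x : g1 x = f x by rewrite /g1 /= hx.
have eg1 : e \o g1 = a.
  apply: funext => z; rewrite /g1 /h /=.
  have := congr1 (fun F => F (a z)) bb'; rewrite /b /= => ->.
  by have := congr1 (fun F => F z) (Gof_l He Ga).
have Pg1 : Phi g1 x' = Phi g x' by rewrite /g1 PhiMP // Phh.
rewrite -Pg1.
have [Sg|Rg] := pselect (singular s pi (pi (f x))).
- have sep := H1 Sg.
  have [a' Ga' [a'a aa']] := Gof_inv Hact Hcont He Ga.
  have La' := Gof_Lof Hact Hcont He Ga'.
  have a'f : a' \o f = e by rewrite -(Gof_r He Ga') -compA.
  have a'g1 : a' \o g1 = e by rewrite -(Gof_r He Ga') -compA eg1.
  have Lw1 : Lof s e (f \o a') := Lof_mul Hact Hcont Ef La'.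
  have Lw2 : Lof s e (g1 \o a') := Lof_mul Hact Hcont Eg1 La'.
  have iw1 : (f \o a') \o (f \o a') = f \o a'.
    apply: funext => z /=.
    have := congr1 (fun F => F (a' z)) a'f => /= ->.
    by have := congr1 (fun F => F (a' z)) (Lof_r He Lf).
  have iw2 : (g1 \o a') \o (g1 \o a') = g1 \o a'.
    apply: funext => z /=.
    have := congr1 (fun F => F (a' z)) a'g1 => /= ->.
    by have := congr1 (fun F => F (a' z)) (Lof_r He Lg1).
  have w12 : f \o a' = g1 \o a'.
    apply: sep => //=.
    have := congr1 (fun F => F x) a'f => /= ->.
    by rewrite ex_ g1x.
  have -> : f = g1.
    by rewrite -(Lof_r He Lf) -a'a compA w12 -compA a'a (Lof_r He Lg1).
  by [].
- set p := Phi f x'; set q := Phi g1 x'.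
  have E'e := PhiE Ee.
  have epq : Phi e p = Phi e q.
    by rewrite /p /q -!PhiMP // eg1.
  have pipq : pi' p = pi' q.
    by rewrite -(idem_pi hX' cpi' pis' E'e e'e' p) epq (idem_pi hX' cpi' pis' E'e e'e').
  have regp : regular s' pi' (pi' p).
    have := H2 Lf (y:=x) (y':=x'); rewrite /tpi pix pix' !subr0; exact.
  have [//|npq] := pselect (p = q).
  exfalso; apply: regp; exists p, q; split => //.
  by exists (Phi e).
Qed.

End WD.

Set Implicit Arguments.
Unset Strict Implicit.


Lemma ev_surj (T : zmodType) (X : topologicalType) (s : T -> X -> X) :
  tds s -> minimal_sys s -> forall x y, exists k, Ellis s k /\ k x = y.
Proof.
case=> hX cX Hact Hcont Hmin x y.
pose K := (fun k : {ptws X -> X} => k x) @` (Ellis s : set {ptws X -> X}).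
have cK : compact K.
  apply: continuous_compact; first exact/continuous_subspaceT/eval_cont.
  exact: Ellis_compact.
have clK : closed K by apply: compact_closed.
have : closure (range (fun t => s t x)) `<=` K.
  apply: closure_sub => // _ [t _ <-]; exists (s t) => //; exact: Ellis_range.
rewrite Hmin => /(_ y I) [k Ek kx]; by exists k.
Qed.

Unset Implicit Arguments.
Set Strict Implicit.

Theorem mainTheorem8 (T : zmodType)
  (X X' : topologicalType) (s : T -> X -> X) (s' : T -> X' -> X')
  (Xeq Xeq' : topologicalZmodType) (chi : T -> Xeq) (chi' : T -> Xeq')
  (pi : X -> Xeq) (pi' : X' -> Xeq')
  (Phi : (X -> X) -> (X' -> X')) (e : X -> X) (x : X) (x' : X') :
  tds s -> minimal_sys s -> ~ distal s ->
  tds s' -> minimal_sys s' -> ~ distal s' ->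
  max_eq_factor s chi pi -> singular s pi 0 ->
  max_eq_factor s' chi' pi' -> singular s' pi' 0 ->
  no_extra_spectrum s pi -> no_extra_spectrum s' pi' ->
  ellis_morphism s s' Phi ->
  min_idempotent s e ->
  (exists y, pi y = 0 /\ x = e y) ->
  (exists y', pi' y' = 0 /\ x' = Phi e y') ->
  (* (1) *)
  (forall y, singular s pi (pi y) -> separates_idempotents s e y) ->
  (* (2) *)
  (forall f, Lof s e f -> forall (y : X) (y' : X'),
     regular s pi (tpi pi f y) -> regular s' pi' (tpi pi' (Phi f) y')) ->
  (* (3) *)
  Phi @` stabG s e x `<=` stabG s' (Phi e) x' ->
  exists phi : X -> X',
    [/\ factor_map s s' phi, phi x = x' &
        forall f, Ellis s f -> forall y, Phi f (phi y) = phi (f y)].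
Proof.
move=> tdsX minX _ tdsX' minX' _ [hXeq _ _ [cpi _ pis] _] _
  [hXeq' _ _ [cpi' _ pis'] _] _ _ _ HPhi He Hx Hx' H1 H2 H3.
have tdsX0 := tdsX; have tdsX0' := tdsX'.
case: tdsX0 => hX cX Hact Hcont; case: tdsX0' => hX' cX' Hact' Hcont'.
case: (HPhi) => PhiE PhiC PhiM Phi1 PhiT.
have wdE : forall k1 k2, Ellis s k1 -> Ellis s k2 -> k1 x = k2 x ->
    Phi k1 x' = Phi k2 x'.
  move=> k1 k2 E1 E2 k12.
  have L1 : Lof s e (k1 \o e) by exists k1.
  have L2 : Lof s e (k2 \o e) by exists k2.
  have := wd Hact Hcont hXeq cpi pis hXeq' cpi' pis' HPhi He Hx Hx' H1 H2 H3 L1 L2.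
  have Ee : Ellis s e by case: He.
  rewrite (PhiM _ _ E1 Ee) (PhiM _ _ E2 Ee) /= !(e'x' HPhi He Hx').
  by apply; rewrite /= (ex_ He Hx).
pose phi := fun y => Phi (projT1 (cid (ev_surj tdsX minX x y))) x'.
have phiE : forall k, Ellis s k -> phi (k x) = Phi k x'.
  move=> k Ek; rewrite /phi; case: cid => k0 [Ek0 k0x] /=.
  exact: wdE.
have Eid : Ellis s id := Ellis_id Hact.
have phix : phi x = x'.
  by have := phiE id Eid; rewrite Phi1.
have phiT : forall t y, phi (s t y) = s' t (phi y).
  move=> t y; have [k [Ek <-]] := ev_surj tdsX minX x y.
  rewrite (phiE k Ek).
  have -> : s' t (Phi k x') = (s' t \o Phi k) x' by [].
  rewrite -(PhiT t k Ek) -phiE //; apply: Ellis_comp => //; exact: Ellis_range.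
have cphi : continuous phi.
  apply/continuous_closedP => C clC.
  pose K := [set k : {ptws X -> X} | Ellis s k /\ C (Phi k x')].
  have KE : K `<=` Ellis s by move=> k [].
  have clK : closed K.
    apply/closure_id; apply/seteqP; split; first exact: subset_closure.
    move=> h hK.
    have Eh : Ellis s h.
      by have := closureS KE hK; rewrite -(proj1 (closure_id _) (@Ellis_closed _ _ s)).
    split => //.
    have PF : ProperFilter (within K (nbhs h)) := @within_nbhs_proper _ K h hK.
    apply: (@closed_cvg _ _ _ PF (fun k : {ptws X -> X} => Phi k x') C clC).
      by apply: (filterS _ (@withinT _ (nbhs h) K _)) => k [_].
    have c1 : (Phi : {ptws X -> X} -> {ptws X' -> X'}) @
        within (Ellis s : set {ptws X -> X}) (nbhs h) --> (Phi h : {ptws X' -> X'}).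
      have := PhiC h; rewrite /= nbhs_subspace_in //.
    have c2 : (Phi : {ptws X -> X} -> {ptws X' -> X'}) @
        within K (nbhs h) --> (Phi h : {ptws X' -> X'}).
      apply: cvg_trans c1; apply: cvg_app; exact: within_subset.
    exact: (cvg_comp (Phi : {ptws X -> X} -> {ptws X' -> X'}) (fun g : {ptws X' -> X'} => g x') c2 (@eval_cont X' X' x' (Phi h))).
  have cK : compact ((fun k : {ptws X -> X} => k x) @` K).
    apply: continuous_compact; first exact/continuous_subspaceT/eval_cont.
    exact: (subclosed_compact clK (@Ellis_compact _ _ s cX) KE).
  suff -> : phi @^-1` C = (fun k : {ptws X -> X} => k x) @` K.
    exact: compact_closed.
  apply/seteqP; split.
    move=> y Cy; have [k [Ek kx]] := ev_surj tdsX minX x y.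
    by exists k => //; split => //; rewrite -phiE // kx.
  by move=> _ [k [Ek Ck] <-]; rewrite /= phiE.
have phisurj : forall y', exists y, phi y = y'.
  move=> y'.
  have cI : compact (phi @` [set: X]).
    by apply: continuous_compact => //; exact: continuous_subspaceT.
  have clI : closed (phi @` [set: X]) by apply: compact_closed.
  have : closure (range (fun t => s' t x')) `<=` phi @` [set: X].
    apply: closure_sub => // _ [t _ <-]; exists (s t x) => //.
    by rewrite phiT phix.
  by rewrite minX' => /(_ y' I) [y _ <-]; exists y.
exists phi; split => //.
move=> f Ef y; have [k [Ek <-]] := ev_surj tdsX minX x y.
rewrite (phiE k Ek).
have -> : f (k x) = (f \o k) x by [].
by rewrite phiE; [rewrite PhiM|apply: Ellis_comp].
Qed.
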